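(* Let $p\geq 2$. Then $$\mathcal{P}_{1,p}\Lambda^{1}(\mathcal{T}_h^2)=\bm{L}_h^p+\bm{\Sigma}_b^p .$$ Here $\bm{L}_h^p$ is the space of globally continuous vector fields whose restriction to each triangle is in $(\mathcal{P}_p)^2$, i.e. the vector Lagrange element of degree $p$. The space $\bm{\Sigma}_b^p$ is $$\bm{\Sigma}_b^p=\{\bm{B}\in\mathcal{P}_{1,p}\Lambda^1(\mathcal{T}_h^2):\ \bm{B}\cdot\bm{\nu}_e=0 \text{ on } e \text{ for every edge } e\in\mathcal{E}\},$$ where $\bm{\nu}_e$ is a unit normal vector of $e$.
   Context: $\Omega\subset\mathbb{R}^2$ is a polygonal domain with a conforming triangulation $\mathcal{T}_h^2$ into triangles. $\mathcal{E}$ denotes the set of edges and $\mathcal{V}$ the set of vertices. $\mathcal{P}_p$ denotes polynomials of degree at most $p$. The space $\mathcal{P}_{1,p}\Lambda^{1}(\mathcal{T}_h^2)$ is defined by $$\mathcal{P}_{1,p}\Lambda^{1}(\mathcal{T}_h^2)=\{\bm{v}\in H(\mathrm{div};\Omega):\ \bm{v}|_f\in(\mathcal{P}_p(f))^2\ \forall f\in\mathcal{T}_h^2,\ \bm{v} \text{ is continuous at every vertex}\}.$$ Continuity at a vertex means that all elements containing that vertex give $\bm{v}$ the same value there. *)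

(* Defs.v *)
From mathcomp Require Import all_boot all_order all_algebra.
From mathcomp Require Import reals.
From mathcomp Require Export mpoly.
Set Implicit Arguments. Unset Strict Implicit. Unset Printing Implicit Defensive.
Import Order.TTheory GRing.Theory Num.Theory.
Local Open Scope ring_scope.

Section Defs.
Variable R : realType.

Definition point := 'rV[R]_2.

(* A mesh: a finite index type T of triangles, each given by its three
   vertices vtx t 0, vtx t 1, vtx t 2. *)
Variable T : finType.
Variable vtx : T -> 'I_3 -> point.

Definition in_tri (t : T) (x : point) : Prop :=
  exists l : 'I_3 -> R,
    (forall i, 0 <= l i) /\ \sum_i l i = 1 /\ x = \sum_i l i *: vtx t i.

Definition is_vtx (t : T) (a : point) : Prop := exists i, vtx t i = a.

(* Conforming triangulation:
   - every triangle is non-degenerate;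
   - distinct indices give distinct triangles (distinct vertex sets);
   - the intersection of two closed triangles is the convex hull of their
     common vertices (empty, a common vertex, or a common edge). *)
Definition conforming_triangulation : Prop :=
  [/\ forall t, \det (col_mx (vtx t 1 - vtx t 0) (vtx t 2 - vtx t 0)) != 0,
      forall t s, t != s -> exists i, ~ is_vtx s (vtx t i)
    & forall t s x, in_tri t x -> in_tri s x ->
        exists l : 'I_3 -> R,
          [/\ forall i, 0 <= l i, \sum_i l i = 1,
              x = \sum_i l i *: vtx t i
            & forall i, l i != 0 -> is_vtx s (vtx t i)]].

Definition in_seg (a b x : point) : Prop :=
  exists u : R, 0 <= u <= 1 /\ x = (1 - u) *: a + u *: b.

Definition dot (u w : point) : R := \sum_i u 0 i * w 0 i.

Definition unit_normal (a b : point) : point :=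
  let d := b - a in
  (Num.sqrt (d 0 0 ^+ 2 + d 0 1 ^+ 2))^-1 *:
    \row_(i < 2) (if i == 0 then - d 0 1 else d 0 0).

Definition pwfield := T -> 'I_2 -> {mpoly R[2]}.

Definition fval (v : pwfield) (t : T) (x : point) : point :=
  \row_(i < 2) (v t i).@[x 0].

(* Each piece is in (P_p)^2 : total degree at most p. *)
Definition pw_deg (p : nat) (v : pwfield) : Prop :=
  forall t i, (msize (v t i) <= p.+1)%N.

Definition normal_continuous (v : pwfield) : Prop :=
  forall t s a b x, a != b ->
    is_vtx t a -> is_vtx t b -> is_vtx s a -> is_vtx s b -> in_seg a b x ->
    dot (fval v t x) (unit_normal a b) = dot (fval v s x) (unit_normal a b).

Definition vertex_continuous (v : pwfield) : Prop :=
  forall t s a, is_vtx t a -> is_vtx s a -> fval v t a = fval v s a.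

Definition globally_continuous (v : pwfield) : Prop :=
  forall t s x, in_tri t x -> in_tri s x -> fval v t x = fval v s x.

Definition P1p (p : nat) (v : pwfield) : Prop :=
  [/\ pw_deg p v, normal_continuous v & vertex_continuous v].

Definition Lh (p : nat) (v : pwfield) : Prop :=
  pw_deg p v /\ globally_continuous v.

Definition Sigma_b (p : nat) (v : pwfield) : Prop :=
  P1p p v /\
  forall t a b x, a != b -> is_vtx t a -> is_vtx t b -> in_seg a b x ->
    dot (fval v t x) (unit_normal a b) = 0.

End Defs.

(* Main.v *)
Require Import Defs.
From mathcomp Require Import all_boot all_order all_algebra.
From mathcomp Require Import reals.
From mathcomp Require Import mpoly.
From mathcomp Require Import ring lra zify.
Set Implicit Arguments. Unset Strict Implicit. Unset Printing Implicit Defensive.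
Import GRing.Theory Num.Theory.
Local Open Scope ring_scope.

Section Deg.
Variable R : realType.
Local Notation P := {mpoly R[2]}.

Definition dle (n : nat) (q : P) := (msize q <= n.+1)%N.

Lemma dleW m n q : (m <= n)%N -> dle m q -> dle n q.
Proof. rewrite /dle => h1 h2; apply: leq_trans h2 _; by rewrite ltnS. Qed.

Lemma dleC n c : dle n c%:MP.
Proof. rewrite /dle msizeC; by case: (c == 0). Qed.

Lemma dleXU i : dle 1 ('X_i : P).
Proof. by rewrite /dle msizeX mdeg1. Qed.

Lemma dleD n p q : dle n p -> dle n q -> dle n (p + q).
Proof.
rewrite /dle => h1 h2; apply: leq_trans (msizeD_le _ _) _.
by rewrite geq_max h1 h2.
Qed.

Lemma dleN n p : dle n p -> dle n (- p).
Proof. by rewrite /dle msizeN. Qed.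

Lemma dleB n p q : dle n p -> dle n q -> dle n (p - q).
Proof. by move=> h1 h2; apply: dleD => //; apply: dleN. Qed.

Lemma dleZ n c p : dle n p -> dle n (c *: p).
Proof. rewrite /dle => h; exact: leq_trans (msizeZ_le _ _) h. Qed.

Lemma dleM m n p q : dle m p -> dle n q -> dle (m + n) (p * q).
Proof.
rewrite /dle => h1 h2.
have [->|nz_p] := eqVneq p 0; first by rewrite mul0r msize0.
have [->|nz_q] := eqVneq q 0; first by rewrite mulr0 msize0.
rewrite msizeM //.
have : (0 < msize p)%N by rewrite lt0n msize_poly_eq0.
have : (0 < msize q)%N by rewrite lt0n msize_poly_eq0.
move=> a b; move: h1 h2 a b; set x := msize p; set y := msize q; lia.
Qed.

Lemma dle0 n : dle n (0 : P).
Proof. by rewrite /dle msize0. Qed.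

Lemma dle1 n : dle n (1 : P).
Proof. by rewrite /dle msize1. Qed.

Lemma dleXn m k p : dle m p -> dle (m * k) (p ^+ k).
Proof.
move=> h; elim: k => [|k IH]; first by rewrite expr0 muln0 dle1.
by rewrite exprS mulnS; apply: dleM.
Qed.

Lemma dle_sum (I : Type) (r : seq I) (Pr : pred I) (F : I -> P) n :
  (forall i, Pr i -> dle n (F i)) -> dle n (\sum_(i <- r | Pr i) F i).
Proof.
move=> h; elim/big_rec: _ => [|i x Pi hx]; first exact: dle0.
by apply: dleD => //; apply: h.
Qed.

Lemma dle_prod (I : Type) (r : seq I) (F : I -> P) (d : I -> nat) :
  (forall i, dle (d i) (F i)) -> dle (\sum_(i <- r) d i) (\prod_(i <- r) F i).
Proof.
move=> h; elim: r => [|i r IH]; first by rewrite !big_nil dle1.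
by rewrite !big_cons; apply: dleM.
Qed.

End Deg.

Section Hom.
Variable R : realType.
Local Notation P := {mpoly R[2]}.
Variable p : nat.

Definition Hom (al be : P) (a b : point R) (Q : P) : P :=
  \sum_(m <- msupp Q) (Q@_m *: ((\prod_(k < 2) (a 0 k *: al + b 0 k *: be) ^+ (m k))
       * (al + be) ^+ (p - mdeg m))).

Lemma Hom_eval al be a b Q (y : 'I_2 -> R) :
  (Hom al be a b Q).@[y] = \sum_(m <- msupp Q) (Q@_m *
     ((\prod_(k < 2) (a 0 k * al.@[y] + b 0 k * be.@[y]) ^+ (m k))
       * (al.@[y] + be.@[y]) ^+ (p - mdeg m))).
Proof.
rewrite /Hom rmorph_sum; apply: eq_bigr => m _ /=.
rewrite mevalZ mevalM rmorphXn /= mevalD rmorph_prod; congr (_ * (_ * _)).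
by apply: eq_bigr => k _; rewrite rmorphXn /= mevalD !mevalZ.
Qed.

Lemma HomA al be a b Q y : al.@[y] + be.@[y] = 1 ->
  (Hom al be a b Q).@[y] = Q.@[(al.@[y] *: a + be.@[y] *: b) 0].
Proof.
move=> h; rewrite Hom_eval mevalE; apply: eq_bigr => m _.
rewrite h expr1n mulr1; congr (_ * _); apply: eq_bigr => k _.
by rewrite !mxE; congr (_ ^+ _); ring.
Qed.

Lemma HomB al be a b Q y : be.@[y] = 0 -> dle p Q ->
  (Hom al be a b Q).@[y] = al.@[y] ^+ p * Q.@[a 0].
Proof.
move=> h hQ; rewrite Hom_eval h [Q.@[a 0]]mevalE big_distrr !big_seq.
apply: eq_bigr => m Hm /=.
have hm : (mdeg m <= p)%N.
  by have := msize_mdeg_lt Hm; rewrite /dle in hQ; move=> H; rewrite -ltnS; apply: leq_trans H hQ.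
set s := al.@[y]; rewrite addr0.
under eq_bigr => k _ do rewrite mulr0 addr0 mulrC exprMn.
rewrite big_split /= prodrXr -mdegE.
have -> : s ^+ p = s ^+ mdeg m * s ^+ (p - mdeg m) by rewrite -exprD subnKC.
ring.
Qed.

Lemma Hom_swap al be a b Q : Hom al be a b Q = Hom be al b a Q.
Proof.
rewrite /Hom; apply: eq_bigr => m _; rewrite [be + al]addrC; congr (_ *: (_ * _)).
by apply: eq_bigr => k _; rewrite addrC.
Qed.

Lemma dleHom al be a b Q : dle 1 al -> dle 1 be -> dle p Q -> dle p (Hom al be a b Q).
Proof.
move=> ha hb hQ; rewrite /Hom big_seq; apply: dle_sum => m Hm; apply: dleZ.
have hm : (mdeg m <= p)%N.
  by have := msize_mdeg_lt Hm; rewrite /dle in hQ; move=> H; rewrite -ltnS; apply: leq_trans H hQ.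
apply: (@dleW _ (mdeg m + (1 * (p - mdeg m)))); first by rewrite mul1n subnKC.
apply: dleM; last by apply: dleXn; apply: dleD.
rewrite mdegE.
apply: (@dleW _ (\sum_(k < 2) (1 * m k))); first by apply: leq_sum => k _; rewrite mul1n.
apply: dle_prod => k; apply: dleXn; apply: dleD; exact: dleZ.
Qed.

End Hom.
Section Geo.
Variable R : realType.

Lemma ord3P (i : 'I_3) : i = 0 \/ i = 1 \/ i = 2.
Proof.
case: i => [[|[|[|k]]] Hk]; [left|right;left|right;right|by []]; exact/val_inj.
Qed.

Lemma ord2P (i : 'I_2) : i = 0 \/ i = 1.
Proof. case: i => [[|[|k]] Hk]; [left|right|by []]; exact/val_inj. Qed.

Lemma sum3 (V : nmodType) (F : 'I_3 -> V) : \sum_(k < 3) F k = F 0 + F 1 + F 2.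
Proof. rewrite !big_ord_recr big_ord0 /= add0r.
by congr (F _ + F _ + F _); apply/val_inj.
Qed.

Lemma sum2 (V : nmodType) (F : 'I_2 -> V) : \sum_(k < 2) F k = F 0 + F 1.
Proof. rewrite !big_ord_recr big_ord0 /= add0r.
by congr (F _ + F _); apply/val_inj.
Qed.

Lemma rowP2 (a b : point R) : a 0 0 = b 0 0 -> a 0 1 = b 0 1 -> a = b.
Proof.
move=> h0 h1; apply/matrixP => i j; rewrite !ord1.
by case: (ord2P j) => ->.
Qed.

Definition tanpart (w n : point R) := w - dot w n *: n.

Lemma dotE (u w : point R) : dot u w = u 0 0 * w 0 0 + u 0 1 * w 0 1.
Proof. by rewrite /dot sum2. Qed.

Lemma tanpart_opp (w n : point R) : tanpart w (- n) = tanpart w n.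
Proof.
apply: rowP2; rewrite /tanpart !mxE !dotE !mxE; ring.
Qed.

Lemma tan_dot (w n : point R) : dot n n = 1 -> dot (tanpart w n) n = 0.
Proof.
rewrite !dotE /tanpart !mxE dotE => h.
have -> : (w 0 0 - (w 0 0 * n 0 0 + w 0 1 * n 0 1) * n 0 0) * n 0 0 +
  (w 0 1 - (w 0 0 * n 0 0 + w 0 1 * n 0 1) * n 0 1) * n 0 1 =
  (w 0 0 * n 0 0 + w 0 1 * n 0 1) * (1 - (n 0 0 * n 0 0 + n 0 1 * n 0 1)) by ring.
by rewrite h subrr mulr0.
Qed.

Lemma un_swap (a b : point R) : unit_normal b a = - unit_normal a b.
Proof.
rewrite /unit_normal.
have -> : (a - b) 0 0 ^+ 2 + (a - b) 0 1 ^+ 2 = (b - a) 0 0 ^+ 2 + (b - a) 0 1 ^+ 2.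
  rewrite !mxE; ring.
apply: rowP2; rewrite !mxE /=; ring.
Qed.

Lemma un_unit (a b : point R) : a != b -> dot (unit_normal a b) (unit_normal a b) = 1.
Proof.
move=> hab; rewrite dotE /unit_normal.
set d0 := (b - a) 0 0; set d1 := (b - a) 0 1.
rewrite !mxE /=.
have hpos : 0 <= d0 ^+ 2 + d1 ^+ 2 by rewrite addr_ge0 // sqr_ge0.
have hnz : d0 ^+ 2 + d1 ^+ 2 != 0.
  apply/negP => h; move/negP: hab; apply; apply/eqP.
  move: h; rewrite paddr_eq0 ?sqr_ge0 // !sqrf_eq0 => /andP [/eqP h0 /eqP h1].
  move: h0 h1; rewrite /d0 /d1 !mxE => h0 h1; apply: rowP2; [move/eqP: h0|move/eqP: h1]; by rewrite subr_eq0 => /eqP ->.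
have hs := sqr_sqrtr hpos.
move: hs; match goal with |- context [(?t)^-1] => set s := t end => hs.
have s0 : s != 0 by apply/eqP => e; move: hs; rewrite e expr0n /= => e'; move: hnz; rewrite -e' eqxx.
transitivity ((d0 ^+ 2 + d1 ^+ 2) / s ^+ 2); first by field.
by rewrite -hs divff // expf_neq0.
Qed.

End Geo.

Lemma det22 (R : realType) (A : 'M[R]_2) :
  \det A = A 0 0 * A 1 1 - A 0 1 * A 1 0.
Proof.
rewrite (expand_det_row _ 0) !big_ord_recl big_ord0 /cofactor !det_mx11.
rewrite /= !mxE /=.
have f0 : (lift ord0 0 : 'I_2) = 1 by apply/val_inj.
have f1 : (lift ord0 ord0 : 'I_2) = 1 by apply/val_inj.
have f2 : (lift (lift ord0 ord0) 0 : 'I_2) = 0 by apply/val_inj.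
rewrite ?f0 ?f1 ?f2 /= expr0 expr1.
have f3 : (lift 1 0 : 'I_2) = 0 by apply/val_inj.
rewrite f3 (_ : ord0 = 0) //; ring.
Qed.

Lemma det22c (R : realType) (a b : 'rV[R]_2) :
  \det (col_mx a b) = a 0 0 * b 0 1 - a 0 1 * b 0 0.
Proof.
rewrite det22.
have h0 j : col_mx a b 0 j = a 0 j by rewrite -(col_mxEu a b 0 j); congr (col_mx a b _ j); apply/val_inj.
have h1 j : col_mx a b 1 j = b 0 j by rewrite -(col_mxEd a b 0 j); congr (col_mx a b _ j); apply/val_inj.
by rewrite !h0 !h1.
Qed.

Section Bary.
Variable R : realType.
Local Notation P := {mpoly R[2]}.
Variable V : 'I_3 -> point R.

Definition d1 k := V 1 0 k - V 0 0 k.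
Definition d2 k := V 2 0 k - V 0 0 k.
Definition Dt := d1 0 * d2 1 - d1 1 * d2 0.
Definition Yk k : P := 'X_k - (V 0 0 k)%:MP.
Definition lam1 : P := Dt^-1 *: (Yk 0 * (d2 1)%:MP - Yk 1 * (d2 0)%:MP).
Definition lam2 : P := Dt^-1 *: (Yk 1 * (d1 0)%:MP - Yk 0 * (d1 1)%:MP).
Definition lam (i : 'I_3) : P :=
  if val i == 0%N then 1 - lam1 - lam2 else if val i == 1%N then lam1 else lam2.

Lemma dle_lam i : dle 1 (lam i).
Proof.
have hY k : dle 1 (Yk k) by apply: dleB; [apply: dleXU|apply: dleC].
have h1 : dle 1 lam1.
  apply: dleZ; apply: dleB; apply: (@dleW _ (1 + 0)) => //; apply: dleM => //; apply: dleC.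
have h2 : dle 1 lam2.
  apply: dleZ; apply: dleB; apply: (@dleW _ (1 + 0)) => //; apply: dleM => //; apply: dleC.
rewrite /lam; case: ifP => _; first by apply: dleB => //; apply: dleB => //; apply: dle1.
by case: ifP.
Qed.

Lemma det_Dt : \det (col_mx (V 1 - V 0) (V 2 - V 0)) = Dt.
Proof. by rewrite det22c /Dt /d1 /d2 !mxE. Qed.

Lemma lam_eval (l : 'I_3 -> R) (x : point R) : Dt != 0 ->
  \sum_i l i = 1 -> x = \sum_i l i *: V i -> forall i, (lam i).@[x 0] = l i.
Proof.
move=> hD hl hx.
have ex k : x 0 k = l 0 * V 0 0 k + l 1 * V 1 0 k + l 2 * V 2 0 k.
  by rewrite hx summxE sum3 !mxE.
have el0 : l 0 = 1 - l 1 - l 2 by rewrite -hl sum3; ring.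
have e1 : lam1.@[x 0] = l 1.
  rewrite /lam1 mevalZ mevalB !mevalM !mevalC /Yk !mevalB !mevalXU !mevalC !ex el0.
  move: hD; rewrite /Dt /d1 /d2 => hD; field.
  done.
have e2 : lam2.@[x 0] = l 2.
  rewrite /lam2 mevalZ mevalB !mevalM !mevalC /Yk !mevalB !mevalXU !mevalC !ex el0.
  move: hD; rewrite /Dt /d1 /d2 => hD; field.
  done.
move=> i; rewrite /lam; case: (ord3P i) => [->|[->|->]] /=.
- by rewrite !mevalB meval1 e1 e2 el0.
- exact: e1.
- exact: e2.
Qed.

End Bary.

Section Main.
Variable R : realType.
Local Notation P := {mpoly R[2]}.
Variable T : finType.
Variable vtx : T -> 'I_3 -> point R.
Variable p : nat.
Variable v : pwfield R T.
Hypothesis hconf : conforming_triangulation vtx.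
Hypothesis hp : (2 <= p)%N.
Hypothesis hv : P1p vtx p v.

Lemma hDt t : Dt (vtx t) != 0.
Proof. by case: hconf => h _ _; rewrite -det_Dt; apply: h. Qed.

Definition e1 (c : 'I_3) : 'I_3 := if val c == 0%N then 1 else 0.
Definition e2 (c : 'I_3) : 'I_3 := if val c == 2%N then 1 else 2.

Lemma e12_neq c : e1 c != e2 c.
Proof. by case: (ord3P c) => [->|[->|->]]. Qed.
Lemma e1_neq c : e1 c != c.
Proof. by case: (ord3P c) => [->|[->|->]]. Qed.
Lemma e2_neq c : e2 c != c.
Proof. by case: (ord3P c) => [->|[->|->]]. Qed.
Lemma e12_cover c c' : c' != c -> e1 c' = c \/ e2 c' = c.
Proof.
by case: (ord3P c) => [->|[->|->]]; case: (ord3P c') => [->|[->|->]] //= _;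
  (left + right); apply/val_inj.
Qed.
Lemma edge_index i j : i != j -> exists c, (e1 c = i /\ e2 c = j) \/ (e1 c = j /\ e2 c = i).
Proof.
case: (ord3P i) => [->|[->|->]]; case: (ord3P j) => [->|[->|->]] //= _.
- by exists 2; left; split; apply/val_inj.
- by exists 1; left; split; apply/val_inj.
- by exists 2; right; split; apply/val_inj.
- by exists 0; left; split; apply/val_inj.
- by exists 1; right; split; apply/val_inj.
- by exists 0; right; split; apply/val_inj.
Qed.

Definition bary2 (i j : 'I_3) (u : R) (k : 'I_3) : R :=
  if k == i then 1 - u else if k == j then u else 0.

Lemma bary2_sum i j u : i != j -> \sum_k bary2 i j u k = 1.
Proof.
rewrite sum3 /bary2.
by case: (ord3P i) => [->|[->|->]]; case: (ord3P j) => [->|[->|->]] //= _; ring.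
Qed.

Lemma bary2_vec (W : 'I_3 -> point R) i j u : i != j ->
  \sum_k bary2 i j u k *: W k = (1 - u) *: W i + u *: W j.
Proof.
rewrite sum3 /bary2.
case: (ord3P i) => [->|[->|->]]; case: (ord3P j) => [->|[->|->]] //= _;
  rewrite !scale0r ?add0r ?addr0; first [done | by rewrite addrC].
Qed.

Lemma bary2_i i j u : i != j -> bary2 i j u i = 1 - u.
Proof. by rewrite /bary2 eqxx. Qed.
Lemma bary2_j i j u : i != j -> bary2 i j u j = u.
Proof. by rewrite /bary2 eq_sym => /negPf ->; rewrite eqxx. Qed.
Lemma bary2_k i j u k : k != i -> k != j -> bary2 i j u k = 0.
Proof. by rewrite /bary2 => /negPf -> /negPf ->. Qed.

Lemma lam_seg t i j u : i != j -> forall k,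
  (lam (vtx t) k).@[((1 - u) *: vtx t i + u *: vtx t j) 0] = bary2 i j u k.
Proof.
move=> hij; apply: lam_eval; first exact: hDt.
  exact: bary2_sum.
by rewrite bary2_vec.
Qed.

Lemma fvalE (w : pwfield R T) t (x : point R) k : fval w t x 0 k = (w t k).@[x 0].
Proof. by rewrite mxE. Qed.

Definition f t i : point R := fval v t (vtx t i).
Definition nu t c := unit_normal (vtx t (e1 c)) (vtx t (e2 c)).
Definition Dvec t c m : P :=
  v t m - (f t (e1 c) 0 m) *: lam (vtx t) (e1 c) - (f t (e2 c) 0 m) *: lam (vtx t) (e2 c).
Definition Pc t c k : P :=
  Dvec t c k - (nu t c 0 k) *: (\sum_(m < 2) (nu t c 0 m) *: Dvec t c m).
Definition bpoly t k : P := \sum_(c < 3)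
  Hom p (lam (vtx t) (e1 c)) (lam (vtx t) (e2 c)) (vtx t (e1 c)) (vtx t (e2 c)) (Pc t c k).
Definition bF : pwfield R T := fun t k => bpoly t k.
Definition lF : pwfield R T := fun t k => v t k - bpoly t k.

Definition Wv t c (x : point R) (l1 l2 : R) : point R :=
  fval v t x - (l1 *: f t (e1 c) + l2 *: f t (e2 c)).

Lemma Pc_eval t c (x : point R) k :
  (Pc t c k).@[x 0] = tanpart (Wv t c x (lam (vtx t) (e1 c)).@[x 0] (lam (vtx t) (e2 c)).@[x 0]) (nu t c) 0 k.
Proof.
have hD m : (Dvec t c m).@[x 0] =
   Wv t c x (lam (vtx t) (e1 c)).@[x 0] (lam (vtx t) (e2 c)).@[x 0] 0 m.
  by rewrite /Dvec !mevalB !mevalZ /Wv !mxE; ring.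
rewrite /Pc mevalB mevalZ rmorph_sum /=.
set W := Wv _ _ _ _ _; set n := nu t c.
rewrite /tanpart [in RHS]mxE [(- (_ : point R)) 0 k]mxE [(_ *: n) 0 k]mxE !hD dotE sum2 /= !mevalZ !hD -/W; ring.
Qed.

Lemma Pc_v1 t c k : (Pc t c k).@[vtx t (e1 c) 0] = 0.
Proof.
have hne := e12_neq c.
have ex : vtx t (e1 c) = (1 - 0) *: vtx t (e1 c) + 0 *: vtx t (e2 c).
  by rewrite subr0 scale1r scale0r addr0.
rewrite Pc_eval {1 2 3}ex !lam_seg // bary2_i // bary2_j //.
rewrite /Wv !subr0 !scale1r !scale0r !addr0 /f subrr /tanpart.
have -> : dot 0 (nu t c) = 0 by rewrite dotE !mxE; ring.
by rewrite scale0r subrr mxE.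
Qed.

Lemma Pc_v2 t c k : (Pc t c k).@[vtx t (e2 c) 0] = 0.
Proof.
have hne := e12_neq c.
have ex : vtx t (e2 c) = (1 - 1) *: vtx t (e1 c) + 1 *: vtx t (e2 c).
  by rewrite subrr scale1r scale0r add0r.
rewrite Pc_eval {1 2 3}ex !lam_seg // bary2_i // bary2_j //.
rewrite /Wv !subrr !scale1r !scale0r !add0r /f subrr /tanpart.
have -> : dot 0 (nu t c) = 0 by rewrite dotE !mxE; ring.
by rewrite scale0r subrr mxE.
Qed.


Lemma dle_v t k : dle p (v t k).
Proof. by case: hv => h _ _; apply: h. Qed.

Lemma dle_Dvec t c m : dle p (Dvec t c m).
Proof.
have hl i : dle p (lam (vtx t) i) by apply: (@dleW _ 1); [lia| apply: dle_lam].
by apply: dleB; [apply: dleB; [apply: dle_v|apply: dleZ]|apply: dleZ].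
Qed.

Lemma dle_Pc t c k : dle p (Pc t c k).
Proof.
apply: dleB; first exact: dle_Dvec.
by apply: dleZ; apply: dle_sum => m _; apply: dleZ; apply: dle_Dvec.
Qed.

Lemma dle_bpoly t k : dle p (bpoly t k).
Proof.
apply: dle_sum => c _; apply: dleHom; [exact: dle_lam|exact: dle_lam|exact: dle_Pc].
Qed.

Lemma bpoly_edge_c t c u k :
  (bpoly t k).@[((1 - u) *: vtx t (e1 c) + u *: vtx t (e2 c)) 0] =
  tanpart (fval v t ((1 - u) *: vtx t (e1 c) + u *: vtx t (e2 c))
     - ((1 - u) *: f t (e1 c) + u *: f t (e2 c))) (nu t c) 0 k.
Proof.
have hne := e12_neq c.
have hl := lam_seg t u hne.
rewrite /bpoly rmorph_sum /= (bigD1 c) //= big1 ?addr0.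
  rewrite HomA; last by rewrite !hl bary2_i ?bary2_j //; ring.
  rewrite !hl bary2_i ?bary2_j // Pc_eval !hl bary2_i ?bary2_j //.
move=> c' hc'; case: (e12_cover hc') => h.
  rewrite Hom_swap HomB; last exact: dle_Pc.
    by rewrite Pc_v2 mulr0.
  by rewrite h hl bary2_k // ?e1_neq ?e2_neq // eq_sym ?e1_neq ?e2_neq.
rewrite HomB; last exact: dle_Pc.
  by rewrite Pc_v1 mulr0.
by rewrite h hl bary2_k // eq_sym ?e1_neq ?e2_neq.
Qed.


Lemma bF_edge t i j u : i != j ->
  fval bF t ((1 - u) *: vtx t i + u *: vtx t j) =
  tanpart (fval v t ((1 - u) *: vtx t i + u *: vtx t j)
     - ((1 - u) *: f t i + u *: f t j)) (unit_normal (vtx t i) (vtx t j)).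
Proof.
move=> hij; apply/matrixP => a k; rewrite ord1 fvalE /bF.
case: (edge_index hij) => c [[h1 h2]|[h1 h2]].
  by rewrite -h1 -h2 bpoly_edge_c.
have ex : (1 - u) *: vtx t i + u *: vtx t j =
   (1 - (1 - u)) *: vtx t (e1 c) + (1 - u) *: vtx t (e2 c).
  by rewrite h1 h2 addrC; congr (_ *: _ + _); ring.
have ef : (1 - u) *: f t i + u *: f t j =
   (1 - (1 - u)) *: f t (e1 c) + (1 - u) *: f t (e2 c).
  by rewrite h1 h2 addrC; congr (_ *: _ + _); ring.
rewrite ex ef bpoly_edge_c /nu h1 h2 un_swap tanpart_opp.
done.
Qed.

Lemma bF_vertex t i : fval bF t (vtx t i) = 0.
Proof.
have hne : i != e1 i by rewrite eq_sym e1_neq.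
have ex : vtx t i = (1 - 0) *: vtx t i + 0 *: vtx t (e1 i).
  by rewrite subr0 scale1r scale0r addr0.
rewrite ex bF_edge // !subr0 !scale1r !scale0r !addr0 /f subrr /tanpart.
have -> : dot 0 (unit_normal (vtx t i) (vtx t (e1 i))) = 0 by rewrite dotE !mxE; ring.
by rewrite scale0r subrr.
Qed.

Lemma vtx_inj t i j : i != j -> vtx t i != vtx t j.
Proof.
move=> hij; apply/negP => /eqP e; move: (hDt t); rewrite /Dt /d1 /d2.
case: (ord3P i) hij e => [->|[->|->]]; case: (ord3P j) => [->|[->|->]] //= _ e;
  rewrite ?e; apply/negP; rewrite negbK; apply/eqP; rewrite ?subrr; ring.
Qed.


Lemma dotBl (a b n : point R) : dot (a - b) n = dot a n - dot b n.
Proof. rewrite !dotE !mxE; ring. Qed.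

Lemma fval_lF t x : fval lF t x = fval v t x - fval bF t x.
Proof. by apply/matrixP => a k; rewrite !mxE mevalB. Qed.

Lemma Sigma_edge t a b x : a != b -> is_vtx vtx t a -> is_vtx vtx t b -> in_seg a b x ->
  dot (fval bF t x) (unit_normal a b) = 0.
Proof.
move=> hab [i hi] [j hj] [u [_ hx]].
have hij : i != j by apply: contraNneq hab => e; rewrite -hi -hj e.
rewrite hx -hi -hj bF_edge //; apply: tan_dot; apply: un_unit.
by rewrite hi hj.
Qed.

Lemma lF_vertex t s a : is_vtx vtx t a -> is_vtx vtx s a -> fval lF t a = fval lF s a.
Proof.
move=> ht hs; rewrite !fval_lF.
case: (ht) => i hi; case: (hs) => j hj.
rewrite -{2}hi.
rewrite (bF_vertex t i) -{3}hj (bF_vertex s j) !subr0.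
by case: hv => _ _ hvc; apply: hvc.
Qed.

Lemma lF_key r i j u : i != j ->
  fval lF r ((1 - u) *: vtx r i + u *: vtx r j) =
  ((1 - u) *: f r i + u *: f r j) +
  dot (fval v r ((1 - u) *: vtx r i + u *: vtx r j) - ((1 - u) *: f r i + u *: f r j))
      (unit_normal (vtx r i) (vtx r j)) *: unit_normal (vtx r i) (vtx r j).
Proof.
move=> hij; rewrite fval_lF bF_edge // /tanpart.
set w := fval v r _; set L := (1 - u) *: f r i + u *: f r j; set n := unit_normal _ _; set d := dot _ n.
by rewrite opprB opprB addrA addrC addrA subrK.
Qed.

Lemma lF_edge t s i j u : 0 <= u <= 1 -> i != j -> is_vtx vtx s (vtx t i) -> is_vtx vtx s (vtx t j) ->
  fval lF t ((1 - u) *: vtx t i + u *: vtx t j) =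
  fval lF s ((1 - u) *: vtx t i + u *: vtx t j).
Proof.
move=> hu hij [i' hi'] [j' hj'].
have hab := vtx_inj t hij.
have hij' : i' != j' by apply: contraNneq hab => e; rewrite -hi' -hj' e.
have ex : (1 - u) *: vtx t i + u *: vtx t j = (1 - u) *: vtx s i' + u *: vtx s j'.
  by rewrite hi' hj'.
rewrite (lF_key t u hij) [in RHS]ex (lF_key s u hij') -ex hi' hj'.
have ef1 : f s i' = f t i.
  by rewrite /f hi'; case: hv => _ _ hvc; apply: hvc; [exists i'|exists i].
have ef2 : f s j' = f t j.
  by rewrite /f hj'; case: hv => _ _ hvc; apply: hvc; [exists j'|exists j].
rewrite ef1 ef2 !dotBl.
congr (_ + (_ - _) *: _).
case: hv => _ hnc _; apply: hnc => //;
  first [by exists i | by exists j | by exists i' | by exists j' | by exists u].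
Qed.



Lemma one_case (W : 'I_3 -> point R) (l : 'I_3 -> R) x i :
  (forall k, k != i -> l k = 0) -> \sum_k l k = 1 -> x = \sum_k l k *: W k -> x = W i.
Proof.
move=> hz hl hx.
have li : l i = 1.
  by move: hl; rewrite (bigD1 i) //= big1 ?addr0 // => k hk; apply: hz.
by rewrite hx (bigD1 i) //= big1 ?addr0 ?li ?scale1r // => k hk; rewrite hz // scale0r.
Qed.

Lemma two_case (W : 'I_3 -> point R) (l : 'I_3 -> R) x i j : i != j ->
  (forall k, k != i -> k != j -> l k = 0) -> \sum_k l k = 1 -> x = \sum_k l k *: W k ->
  x = (1 - l j) *: W i + l j *: W j.
Proof.
move=> hij hz hl hx.
have li : l i = 1 - l j.
  move: hl; rewrite (bigD1 i) //= (bigD1 j) 1?eq_sym //= big1 ?addr0.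
    by move=> <-; ring.
  by move=> k /andP [h1 h2]; apply: hz.
rewrite hx (bigD1 i) //= (bigD1 j) 1?eq_sym //= big1 ?addr0 ?li //.
by move=> k /andP [h1 h2]; rewrite hz // scale0r.
Qed.

Lemma le1 (l : 'I_3 -> R) : (forall k, 0 <= l k) -> \sum_k l k = 1 -> forall j, l j <= 1.
Proof.
move=> h0 hl j; move: hl; rewrite sum3 => hl.
have := h0 0; have := h0 1; have := h0 2.
by case: (ord3P j) => [->|[->|->]]; lra.
Qed.

Lemma lF_cont t s x : in_tri vtx t x -> in_tri vtx s x -> fval lF t x = fval lF s x.
Proof.
move=> ht hs; case: hconf => _ hii hiii.
have [l [hl0 hl1 hx hsh]] := hiii t s x ht hs.
have single i : (forall k, k != i -> l k = 0) -> l i != 0 -> fval lF t x = fval lF s x.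
  move=> hz hn; rewrite (one_case hz hl1 hx); apply: lF_vertex; first by exists i.
  exact: hsh.
have pair i j : i != j -> (forall k, k != i -> k != j -> l k = 0) -> l i != 0 -> l j != 0 ->
    fval lF t x = fval lF s x.
  move=> hij hz hi hj; rewrite (two_case hij hz hl1 hx); apply: lF_edge => //; try exact: hsh.
  by rewrite hl0 le1.
have [z0|n0] := eqVneq (l 0) 0; have [z1|n1] := eqVneq (l 1) 0;
  have [z2|n2] := eqVneq (l 2) 0.
- exfalso; move: hl1; rewrite sum3 z0 z1 z2 addr0 addr0 => /esym/eqP; rewrite oner_eq0.
  done.
- by apply: (single 2) => // k; case: (ord3P k) => [->|[->|->]] //= *.
- by apply: (single 1) => // k; case: (ord3P k) => [->|[->|->]] //= *.
- by apply: (pair 1 2) => // k; case: (ord3P k) => [->|[->|->]] //= *.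
- by apply: (single 0) => // k; case: (ord3P k) => [->|[->|->]] //= *.
- by apply: (pair 0 2) => // k; case: (ord3P k) => [->|[->|->]] //= *.
- by apply: (pair 0 1) => // k; case: (ord3P k) => [->|[->|->]] //= *.
have -> : t = s; last by [].
apply/eqP; apply/negPn/negP => hts; have [i hi] := hii t s hts; apply: hi; apply: hsh.
by case: (ord3P i) => [->|[->|->]].
Qed.

Lemma forward : exists l b : pwfield R T,
  [/\ Lh vtx p l, Sigma_b vtx p b & forall t i, v t i = l t i + b t i].
Proof.
exists lF, bF; split.
- split; first by move=> t k; apply: dleB; [apply: dle_v|apply: dle_bpoly].
  by move=> t s x; apply: lF_cont.
- split; [split|].
  + by move=> t k; apply: dle_bpoly.
  + move=> t s a b x hab hta htb hsa hsb hx.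
    have e1 := Sigma_edge hab hta htb hx; have e2 := Sigma_edge hab hsa hsb hx.
    exact: (etrans e1 (esym e2)).
  + move=> t s a [i hi] [j hj].
    have e1 := bF_vertex t i; have e2 := bF_vertex s j.
    rewrite hi in e1; rewrite hj in e2; exact: (etrans e1 (esym e2)).
  + move=> t a b x hab hta htb hx; exact: (Sigma_edge hab hta htb hx).
- move=> t i; exact: (esym (subrK (bpoly t i) (v t i))).
Qed.

End Main.


Section Back.
Variable R : realType.
Variable T : finType.
Variable vtx : T -> 'I_3 -> point R.
Variable p : nat.

Lemma bary2_ge0 i j (u : R) k : 0 <= u <= 1 -> 0 <= bary2 i j u k.
Proof. by move=> /andP [h0 h1]; rewrite /bary2; case: ifP => _; [lra|case: ifP => _ //; lra]. Qed.

Lemma seg_in_tri t a b x : is_vtx vtx t a -> is_vtx vtx t b -> in_seg a b x -> in_tri vtx t x.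
Proof.
move=> [i hi] [j hj] [u [hu hx]].
have [eij|nij] := eqVneq i j.
  have ex : x = (1 - 0) *: vtx t i + 0 *: vtx t (e1 i).
    by rewrite hx -hi -hj eij subr0 scale1r scale0r addr0 -scalerDl subrK scale1r.
  have hne : i != e1 i by rewrite eq_sym e1_neq.
  exists (bary2 i (e1 i) 0); split; first by move=> k; apply: bary2_ge0; apply/andP; split; lra.
  by split; [rewrite bary2_sum | rewrite bary2_vec].
exists (bary2 i j u); split; first by move=> k; apply: bary2_ge0.
by split; [rewrite bary2_sum | rewrite bary2_vec // hx hi hj].
Qed.

Lemma vtx_in_tri t a : is_vtx vtx t a -> in_tri vtx t a.
Proof.
move=> ha; apply: (seg_in_tri ha ha); exists 0; split; first by apply/andP; split; lra.
by rewrite subr0 scale1r scale0r addr0.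
Qed.

Lemma fval_add (l b v : pwfield R T) t x : (forall t i, v t i = l t i + b t i) ->
  fval v t x = fval l t x + fval b t x.
Proof. by move=> h; apply/matrixP => a k; rewrite !mxE h mevalD. Qed.

Lemma dotDl (a b n : point R) : dot (a + b) n = dot a n + dot b n.
Proof. rewrite !dotE !mxE; ring. Qed.

Lemma backward (l b v : pwfield R T) : Lh vtx p l -> Sigma_b vtx p b ->
  (forall t i, v t i = l t i + b t i) -> P1p vtx p v.
Proof.
move=> [hld hlc] [[hbd hbn hbv] hbs] hv; split.
- by move=> t k; rewrite hv; apply: dleD; [apply: hld|apply: hbd].
- move=> t s a b0 x hab hta htb hsa hsb hx.
  rewrite !(fval_add _ _ hv) !dotDl (hbs t a b0 x) // (hbs s a b0 x) //.
  rewrite (hlc t s x) //; [exact: (seg_in_tri hta htb hx)|exact: (seg_in_tri hsa hsb hx)].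
- move=> t s a hta hsa; rewrite !(fval_add _ _ hv) (hbv t s a) //.
  by rewrite (hlc t s a) //; apply: vtx_in_tri.
Qed.

End Back.

Theorem mainTheorem1 (R : realType) (T : finType) (vtx : T -> 'I_3 -> point R)
    (p : nat) :
  conforming_triangulation vtx -> (2 <= p)%N ->
  forall v : pwfield R T,
    P1p vtx p v <->
    exists l b : pwfield R T,
      [/\ Lh vtx p l, Sigma_b vtx p b & forall t i, v t i = l t i + b t i].
Proof.
move=> hconf hp v; split.
  by move=> hv; apply: forward.
by move=> [l [b [hl hb hlb]]]; apply: (backward hl hb hlb).
Qed.
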